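(* Let $\mathrm{st}(x_1,\dots,x_n)$ be the monoid of $K$-algebra endomorphisms $g$ of $\mathbb{S}_n$ with $g(x_i)=x_i$ for all $i$. Then $\mathrm{st}(x_1,\dots,x_n)$ is an abelian monoid, each non-identity element of it is an injective endomorphism of $\mathbb{S}_n$ that is not an automorphism, and it consists precisely of the endomorphisms $\sigma_p$ given by $\sigma_p(x_i)=x_i$, $\sigma_p(y_i)=y_i+p_i(1-x_iy_i)$ ($i=1,\dots,n$), where $p=(p_1,\dots,p_n)\in K[x_1,\dots,x_n]^n$ ranges over the $n$-tuples satisfying, for every pair $i\ne j$, $$-x_j^{-1}(p_i-p_{i,j})+x_i^{-1}(p_j-p_{j,i})+p_ip_{j,i}-p_jp_{i,j}=0,\qquad p_{i,j}:=p_i|_{x_j=0}$$ (here $x_j^{-1}(p_i-p_{i,j})$ denotes the polynomial quotient).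
   Context: $K$ is a field of characteristic zero. $\mathbb{S}_n$ is the $K$-algebra generated by $x_1,\dots,x_n,y_1,\dots,y_n$ with defining relations $y_ix_i=1$ and $[x_i,y_j]=[x_i,x_j]=[y_i,y_j]=0$ for $i\ne j$; $K[x_1,\dots,x_n]$ is the subalgebra generated by the $x_i$ (a polynomial algebra). *)

(* Defs.v *)
From HB Require Import structures.
From mathcomp Require Import all_boot all_order all_algebra.
Set Implicit Arguments. Unset Strict Implicit. Unset Printing Implicit Defensive.
Import Order.TTheory GRing.Theory Num.Theory.
Local Open Scope ring_scope.

(* Polynomial ring K[x_0,...,x_{n-1}] as iterated univariate polynomials:
   mpoly K (m+1) = (mpoly K m)[x_m]. *)
Fixpoint mpoly (K : comNzRingType) (n : nat) : comNzRingType :=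
  match n with
  | 0 => K
  | m.+1 => {poly (mpoly K m)}
  end.

Fixpoint mvar (K : comNzRingType) (n : nat) (i : nat) : mpoly K n :=
  match n return mpoly K n with
  | 0 => 0
  | m.+1 => if i == m then 'X else (@mvar K m i)%:P
  end.

Fixpoint msubst0 (K : comNzRingType) (n : nat) (j : nat) : mpoly K n -> mpoly K n :=
  match n return mpoly K n -> mpoly K n with
  | 0 => fun c => c
  | m.+1 => fun p : {poly mpoly K m} =>
      if j == m then (p`_0)%:P else map_poly (@msubst0 K m j) p
  end.

(* polynomial quotient by x_j (drops the monomials not divisible by x_j,
   and divides the others by x_j) *)
Fixpoint mdivX (K : comNzRingType) (n : nat) (j : nat) : mpoly K n -> mpoly K n :=
  match n return mpoly K n -> mpoly K n with
  | 0 => fun c => c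
  | m.+1 => fun p : {poly mpoly K m} =>
      if j == m then drop_poly 1 p else map_poly (@mdivX K m j) p
  end.

Fixpoint meval (K : comNzRingType) (A : lalgType K) (f : nat -> A) (n : nat)
  : mpoly K n -> A :=
  match n return mpoly K n -> A with
  | 0 => fun c => c%:A
  | m.+1 => fun p : {poly mpoly K m} =>
      \sum_(k < size p) meval f (p`_k) * f m ^+ k
  end.

Definition ext (A : nzRingType) (n : nat) (x : 'I_n -> A) : nat -> A :=
  fun k => oapp x 0 (insub k).

Definition is_alg_hom (K : nzRingType) (A B : algType K) (f : A -> B) : Prop :=
  [/\ {morph f : u v / u + v}, {morph f : u v / u * v}, f 1 = 1
    & forall (a : K) (u : A), f (a *: u) = a *: f u].

Definition jacobson_rel (A : nzRingType) (n : nat) (x y : 'I_n -> A) : Prop :=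
  (forall i, y i * x i = 1) /\
  (forall i j, i != j ->
     [/\ x i * y j = y j * x i, x i * x j = x j * x i & y i * y j = y j * y i]).

(* (A, x, y) is the K-algebra S_n presented by generators x_i, y_i and the
   relations above: universal property of the presentation. *)
Definition is_Sn (K : nzRingType) (A : algType K) (n : nat) (x y : 'I_n -> A) : Prop :=
  jacobson_rel x y /\
  forall (B : algType K) (xb yb : 'I_n -> B), jacobson_rel xb yb ->
    (exists f : A -> B, is_alg_hom f /\ forall i, f (x i) = xb i /\ f (y i) = yb i) /\
    (forall f g : A -> B, is_alg_hom f -> is_alg_hom g ->
       (forall i, f (x i) = g (x i) /\ f (y i) = g (y i)) -> forall a, f a = g a).

Definition admissible (K : comNzRingType) (n : nat) (p : 'I_n -> mpoly K n) : Prop :=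
  forall i j : 'I_n, i != j ->
    - mdivX j (p i - msubst0 j (p i)) + mdivX i (p j - msubst0 i (p j))
    + p i * msubst0 i (p j) - p j * msubst0 j (p i) = 0.

(* Main.v *)
Require Import Defs.
From HB Require Import structures.
From mathcomp Require Import all_boot all_order all_algebra.
From Stdlib Require Import Classical ClassicalEpsilon FunctionalExtensionality ProofIrrelevance.
Set Implicit Arguments. Unset Strict Implicit. Unset Printing Implicit Defensive.
Import Order.TTheory GRing.Theory Num.Theory.
Local Open Scope ring_scope.
Section MapHelp.
Variables R S : nzRingType.
Variable f : R -> S.
Hypothesis f0 : f 0 = 0.
Hypothesis fD : forall a b, f (a + b) = f a + f b.

Lemma mapD p q : map_poly f (p + q) = map_poly f p + map_poly f q.
Proof. by apply/polyP=> k; rewrite coefD !coef_map_id0 // coefD fD. Qed.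

Lemma mapC c : map_poly f c%:P = (f c)%:P.
Proof. by apply/polyP=> k; rewrite coef_map_id0 // !coefC; case: (k == 0)%N. Qed.

Lemma f_sum I (r : seq I) (F : I -> R) : f (\sum_(i <- r) F i) = \sum_(i <- r) f (F i).
Proof. by elim: r => [|a r IH]; rewrite ?big_nil ?f0 // !big_cons fD IH. Qed.

Hypothesis fM : forall a b, f (a * b) = f a * f b.

Lemma mapM p q : map_poly f (p * q) = map_poly f p * map_poly f q.
Proof.
apply/polyP=> k; rewrite coef_map_id0 // !coefM f_sum.
by apply: eq_bigr => i _; rewrite fM !coef_map_id0.
Qed.
End MapHelp.

Section MP.
Variable K : fieldType.

Fixpoint mc (n : nat) (c : K) : mpoly K n :=
  match n return mpoly K n with 0 => c | m.+1 => (mc m c)%:P end.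

Lemma mcD n a b : mc n (a + b) = mc n a + mc n b.
Proof. by elim: n => //= m IH; rewrite IH polyCD. Qed.
Lemma mcM n a b : mc n (a * b) = mc n a * mc n b.
Proof. by elim: n => //= m IH; rewrite IH polyCM. Qed.
Lemma mc1 n : mc n 1 = 1.
Proof. by elim: n => //= m IH; rewrite IH. Qed.
Lemma mc0 n : mc n 0 = 0.
Proof. by elim: n => //= m IH; rewrite IH. Qed.

Lemma ms0 n j : msubst0 j (0 : mpoly K n) = 0.
Proof. elim: n => //= m IH; case: ifP => _; first by rewrite coef0.
by apply/polyP=> k; rewrite coef_map_id0 // !coef0 IH. Qed.

Lemma msD n j (u v : mpoly K n) : msubst0 j (u + v) = msubst0 j u + msubst0 j v.
Proof. elim: n u v => //= m IH u v; case: ifP => _; first by rewrite coefD polyCD.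
by rewrite mapD //; apply: ms0. Qed.

Lemma msM n j (u v : mpoly K n) : msubst0 j (u * v) = msubst0 j u * msubst0 j v.
Proof. elim: n u v => //= m IH u v; case: ifP => _; first by rewrite coef0M polyCM.
by rewrite mapM //; [apply: ms0|apply: msD]. Qed.

Lemma ms1 n j : msubst0 j (1 : mpoly K n) = 1.
Proof. elim: n => //= m IH; case: ifP => _; first by rewrite coefC.
by rewrite mapC ?IH //; apply: ms0. Qed.

Lemma ms_mc n j c : msubst0 j (mc n c) = mc n c.
Proof. elim: n => //= m IH; case: ifP => _; first by rewrite coefC.
by rewrite mapC ?IH //; apply: ms0. Qed.

Lemma ms_var_eq n i : (i < n)%N -> msubst0 i (mvar K n i) = 0.
Proof.
elim: n => //= m IH; rewrite ltnS leq_eqVlt => /orP[/eqP ->|lt].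
  by rewrite eqxx coefX.
rewrite (ltn_eqF lt) mapC ?IH //; apply: ms0.
Qed.

Lemma ms_var_neq n i j : i != j -> msubst0 j (mvar K n i) = mvar K n i.
Proof.
move=> ne; elim: n => //= m IH; case: (eqVneq j m) => [ejm|nm].
  case: ifP => [/eqP ei|_]; first by rewrite ei -ejm eqxx in ne.
  by rewrite coefC.
case: ifP => [/eqP im|_]; last by rewrite mapC ?IH //; apply: ms0.
apply/polyP=> k; rewrite coef_map_id0; last by apply: ms0.
rewrite !coefX; case: (k == 1)%N; first by rewrite ms1.
by rewrite ms0.
Qed.
Lemma md0 n j : mdivX j (0 : mpoly K n) = 0.
Proof. elim: n => //= m IH; case: ifP => _; first exact: drop_poly0r.
by apply/polyP=> k; rewrite coef_map_id0 // !coef0 IH. Qed.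

Lemma mdD n j (u v : mpoly K n) : mdivX j (u + v) = mdivX j u + mdivX j v.
Proof. elim: n u v => //= m IH u v; case: ifP => _; first exact: drop_polyD.
by rewrite mapD //; apply: md0. Qed.

Lemma md_var_eq n i (u : mpoly K n) : (i < n)%N -> mdivX i (mvar K n i * u) = u.
Proof.
elim: n u => //= m IH u; rewrite ltnS leq_eqVlt => /orP[/eqP ->|lt].
  by rewrite eqxx mulrC -['X]expr1 drop_polyMXn_id.
rewrite (ltn_eqF lt); apply/polyP=> k; rewrite coef_map_id0; last exact: md0.
by rewrite coefCM IH.
Qed.

Lemma md_var_neq n i j (u : mpoly K n) : i != j ->
  mdivX j (mvar K n i * u) = mvar K n i * mdivX j u.
Proof.
move=> ne; elim: n u => //= m IH u; case: (eqVneq j m) => [ejm|nm].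
  have -> : (i == m) = false by apply/negbTE; rewrite -ejm.
  by apply/polyP=> k; rewrite coef_drop_poly !coefCM coef_drop_poly.
case: ifP => [/eqP im|_].
  apply/polyP=> k; rewrite coef_map_id0; last exact: md0.
  rewrite !coefXM; case: (k == 0)%N; first by rewrite md0.
  by rewrite coef_map_id0 //; exact: md0.
apply/polyP=> k; rewrite coef_map_id0; last exact: md0.
by rewrite !coefCM IH coef_map_id0 //; exact: md0.
Qed.

Lemma md_mc n j c (u : mpoly K n) : mdivX j (mc n c * u) = mc n c * mdivX j u.
Proof.
elim: n u => //= m IH u; case: ifP => _.
  by apply/polyP=> k; rewrite coef_drop_poly !coefCM coef_drop_poly.
apply/polyP=> k; rewrite coef_map_id0; last exact: md0.
by rewrite !coefCM IH coef_map_id0 //; exact: md0.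
Qed.

Lemma md_ms n j (u : mpoly K n) : (j < n)%N -> mdivX j (msubst0 j u) = 0.
Proof.
elim: n u => //= m IH u; rewrite ltnS leq_eqVlt => /orP[/eqP ->|lt].
  by rewrite eqxx drop_poly_eq0 // size_polyC_leq1.
rewrite (ltn_eqF lt); apply/polyP=> k; rewrite coef_map_id0; last exact: md0.
by rewrite coef_map_id0 ?IH ?coef0 //; exact: ms0.
Qed.
Lemma decomp n j (u : mpoly K n) : msubst0 j u + mvar K n j * mdivX j u = u.
Proof.
elim: n u => //= [u|m IH u]; first by rewrite mul0r addr0.
case: ifP => _.
  apply/polyP=> k; rewrite coefD coefC coefXM coef_drop_poly.
  by case: k => [|k]; rewrite ?addr0 ?add0r // addn1.
apply/polyP=> k; rewrite coefD coefCM !coef_map_id0 ?IH //; [exact: md0|exact: ms0].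
Qed.

Lemma md_comm n i j (u : mpoly K n) : mdivX i (mdivX j u) = mdivX j (mdivX i u).
Proof.
elim: n u => //= m IH u.
case: (eqVneq i m) => [eim|im]; case: (eqVneq j m) => [ejm|jm].
- by [].
-  apply/polyP=> k; rewrite coef_drop_poly !coef_map_id0 ?coef_drop_poly //; exact: md0.
-  apply/polyP=> k; rewrite coef_drop_poly !coef_map_id0 ?coef_drop_poly //; exact: md0.
-  apply/polyP=> k; rewrite !coef_map_id0 ?IH //; try exact: md0.
Qed.

Fixpoint ev0 (n : nat) : mpoly K n -> K :=
  match n return mpoly K n -> K with 0 => fun c => c | m.+1 => fun p : {poly mpoly K m} => ev0 (p`_0) end.

Lemma ev0D n (u v : mpoly K n) : ev0 (u + v) = ev0 u + ev0 v.
Proof. by elim: n u v => //= m IH u v; rewrite coefD IH. Qed.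
Lemma ev0M n (u v : mpoly K n) : ev0 (u * v) = ev0 u * ev0 v.
Proof. by elim: n u v => //= m IH u v; rewrite coef0M IH. Qed.
Lemma ev0_mc n c : ev0 (mc n c) = c.
Proof. by elim: n => //= m IH; rewrite coefC. Qed.
Lemma ev0_0 n : ev0 (0 : mpoly K n) = 0.
Proof. by rewrite -(mc0 n) ev0_mc. Qed.
Lemma ev0_1 n : ev0 (1 : mpoly K n) = 1.
Proof. by rewrite -(mc1 n) ev0_mc. Qed.
Lemma ev0_varM n i (u : mpoly K n) : (i < n)%N -> ev0 (mvar K n i * u) = 0.
Proof.
elim: n u => //= m IH u; rewrite ltnS leq_eqVlt => /orP[/eqP ->|lt].
  by rewrite eqxx coefXM /= ev0_0.
by rewrite (ltn_eqF lt) coefCM IH.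
Qed.
Lemma ev0_ms n j (u : mpoly K n) : ev0 (msubst0 j u) = ev0 u.
Proof.
elim: n u => //= m IH u; case: ifP => _; first by rewrite coefC.
by rewrite coef_map_id0 ?IH //; exact: ms0.
Qed.

Lemma fix_const n (u : mpoly K n) :
  (forall j, (j < n)%N -> msubst0 j u = u) -> u = mc n (ev0 u).
Proof.
elim: n u => //= m IH u H.
have H0 := H m (ltnSn m); rewrite /= eqxx in H0.
have H1 : u`_0 = mc m (ev0 (u`_0)).
  apply: IH => j lt; have := H j (ltnW lt); rewrite /= (ltn_eqF lt) => Hj.
  by rewrite -{2}Hj coef_map_id0 //; exact: ms0.
by rewrite -H1 H0.
Qed.

Lemma mpoly_mul_eq0 n (u v : mpoly K n) : u * v = 0 -> u = 0 \/ v = 0.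
Proof.
elim: n u v => [|m IH] u v /=.
  by move/eqP; rewrite mulf_eq0 => /orP[/eqP->|/eqP->]; [left|right].
case: (eqVneq u 0) => [->|u0]; first by left.
case: (eqVneq v 0) => [->|v0]; first by right.
move=> uv; exfalso.
have hl : lead_coef u * lead_coef v != 0.
  apply/eqP=> /IH [] /eqP; rewrite lead_coef_eq0; [exact/negP|exact/negP].
have := size_proper_mul hl; rewrite uv size_poly0.
have : (0 < size u)%N by rewrite size_poly_gt0.
have : (0 < size v)%N by rewrite size_poly_gt0.
by move=> h1 h2; rewrite -(prednK h1) -(prednK h2) addnS.
Qed.

Lemma unit_size (R : nzRingType) (p q : {poly R}) :
  (forall a b : R, a * b = 0 -> a = 0 \/ b = 0) -> p * q = 1 -> size p = 1%N /\ size q = 1%N.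
Proof.
move=> dom pq.
have p0 : p != 0 by apply/eqP=> p0; move: pq; rewrite p0 mul0r => /eqP; rewrite eq_sym oner_eq0.
have q0 : q != 0 by apply/eqP=> q0; move: pq; rewrite q0 mulr0 => /eqP; rewrite eq_sym oner_eq0.
have hl : lead_coef p * lead_coef q != 0.
  apply/eqP=> /dom [] /eqP; rewrite lead_coef_eq0; [exact/negP|exact/negP].
have := size_proper_mul hl; rewrite pq size_poly1.
have : (0 < size p)%N by rewrite size_poly_gt0.
have : (0 < size q)%N by rewrite size_poly_gt0.
move=> h1 h2; rewrite -(prednK h1) -(prednK h2) addnS succnK => /eqP; rewrite eq_sym addSn eqSS addn_eq0 => /andP[/eqP e1 /eqP e2].
by rewrite e1 e2.
Qed.

Lemma unit_var n i (a b : mpoly K n) :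
  (1 - mvar K n i * a) * (1 - mvar K n i * b) = 1 -> mvar K n i * a = 0.
Proof.
elim: n a b => [|m IH] a b /=; first by rewrite mul0r.
move=> H; have [su sv] := unit_size (@mpoly_mul_eq0 m) H.
have hk : forall k, (1 - (if i == m then 'X else (mvar K m i)%:P) * a)`_k.+1 = 0.
  by move=> k; rewrite nth_default // su.
case: ifP hk H => [_|_] hk H.
  suff -> : a = 0 by rewrite mulr0.
  by apply/polyP=> k; have := hk k; rewrite coefB coefC coefXM /= sub0r coef0 => /eqP; rewrite oppr_eq0 => /eqP.
apply/polyP=> k; rewrite coefCM coef0.
case: k => [|k]; last first.
  by have := hk k; rewrite coefB coefC coefCM /= sub0r => /eqP; rewrite oppr_eq0 => /eqP.
apply: (IH _ (b`_0)).
have := congr1 (fun p : {poly mpoly K m} => p`_0) H; rewrite /= coef0M coefC /=.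
by rewrite !coefB !coefC !coefCM.
Qed.
Definition mono n (c : 'I_n -> nat) : mpoly K n := \prod_(i < n) mvar K n i ^+ c i.
Definition decr n (c : 'I_n -> nat) (i : 'I_n) : 'I_n -> nat :=
  fun j => if j == i then (c j).-1 else c j.

Lemma ms_prod n j (I : Type) (r : seq I) (F : I -> mpoly K n) :
  msubst0 j (\prod_(k <- r) F k) = \prod_(k <- r) msubst0 j (F k).
Proof. by elim: r => [|a r IH]; rewrite ?big_nil ?ms1 // !big_cons msM IH. Qed.

Lemma ms_expr n j (u : mpoly K n) k : msubst0 j (u ^+ k) = msubst0 j u ^+ k.
Proof. by elim: k => [|k IH]; rewrite ?expr0 ?ms1 // !exprS msM IH. Qed.

Lemma md_mono n (i : 'I_n) (c : 'I_n -> nat) :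
  mdivX i (mono c) = if (0 < c i)%N then mono (decr c i) else 0.
Proof.
rewrite /mono (bigD1 i) //= (bigD1 i (P := predT)) //=.
set r := \prod_(j < n | j != i) _.
have -> : \prod_(j < n | j != i) mvar K n j ^+ decr c i j = r.
  by apply: eq_bigr => j ji; rewrite /decr (negbTE ji).
have rfix : msubst0 i r = r.
  rewrite (big_morph _ (@msM n i) (ms1 n i)); apply: eq_bigr => j ji; rewrite ms_expr ms_var_neq //.
rewrite /decr eqxx; case: (c i) => [|k] /=.
  by rewrite expr0 mul1r -rfix md_ms.
by rewrite exprS -mulrA md_var_eq.
Qed.
Lemma size_map_leq (R S : nzRingType) (f : R -> S) (p : {poly R}) : (size (map_poly f p) <= size p)%N.
Proof. exact: size_poly. Qed.

Section Meval.
Variable A : algType K.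
Implicit Types f g : nat -> A.

Lemma meval0 f n : meval f (0 : mpoly K n) = 0.
Proof. by case: n => [|m] /=; [rewrite scale0r|rewrite size_poly0 big_ord0]. Qed.

Lemma meval_wide f m (p : mpoly K m.+1) N : (size p <= N)%N ->
  meval f p = \sum_(k < N) meval f p`_k * f m ^+ k.
Proof.
move=> le /=; rewrite (big_ord_widen N (fun k => meval f p`_k * f m ^+ k)) //.
rewrite big_mkcond /=; apply: eq_bigr => k _; case: ifP => // /negbT.
by rewrite -leqNgt => /(nth_default 0) ->; rewrite meval0 mul0r.
Qed.

Lemma mevalD f n (u v : mpoly K n) : meval f (u + v) = meval f u + meval f v.
Proof.
elim: n u v => [|m IH] u v; first by rewrite /= scalerDl.
set N := maxn (size u) (size v).
rewrite !(@meval_wide _ _ _ N) ?leq_maxl ?leq_maxr ?(leq_trans (size_add _ _)) //.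
by rewrite -big_split; apply: eq_bigr => k _; rewrite coefD IH mulrDl.
Qed.

Lemma mevalN f n (u : mpoly K n) : meval f (- u) = - meval f u.
Proof. by apply/eqP; rewrite -subr_eq0 opprK -mevalD addNr meval0. Qed.

Lemma mevalB f n (u v : mpoly K n) : meval f (u - v) = meval f u - meval f v.
Proof. by rewrite mevalD mevalN. Qed.

Lemma meval_mc f n c : meval f (mc n c) = c%:A.
Proof.
elim: n => [//|m IH]; rewrite (@meval_wide _ _ _ 1) /= ?size_polyC_leq1 //.
by rewrite big_ord1 coefC /= IH expr0 mulr1.
Qed.

Lemma meval1 f n : meval f (1 : mpoly K n) = 1.
Proof. by rewrite -(mc1 n) meval_mc scale1r. Qed.

Lemma meval_var f n i : (i < n)%N -> meval f (mvar K n i) = f i.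
Proof.
elim: n => [//|m IH]; rewrite ltnS leq_eqVlt => /orP[/eqP ->|lt].
  simpl mvar; rewrite eqxx (@meval_wide _ _ _ 2) ?size_polyX //.
  by rewrite !big_ord_recl big_ord0 !coefX /= meval0 meval1 mul0r add0r expr1 mul1r addr0.
simpl mvar; rewrite (ltn_eqF lt) (@meval_wide _ _ _ 1) ?size_polyC_leq1 //.
by rewrite big_ord1 coefC /= IH // expr0 mulr1.
Qed.

Lemma meval_ext f g n (p : mpoly K n) : (forall k, (k < n)%N -> f k = g k) ->
  meval f p = meval g p.
Proof.
elim: n p => [//|m IH] p H /=; apply: eq_bigr => k _.
by rewrite (IH _ (fun k lt => H k (ltnW lt))) H.
Qed.

Lemma comm_meval f n (z : A) (p : mpoly K n) :
  (forall k, (k < n)%N -> z * f k = f k * z) -> z * meval f p = meval f p * z.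
Proof.
elim: n p => [|m IH] p H /=; first by rewrite -scalerAr -scalerAl mulr1 mul1r.
rewrite mulr_sumr mulr_suml; apply: eq_bigr => k _.
have hz : GRing.comm z (f m ^+ k) by apply: commrX; exact: H.
by rewrite mulrA IH -?mulrA ?hz // => j lt; apply: H; exact: ltnW.
Qed.

Lemma meval_horner f m (p : mpoly K m.+1) :
  meval f p = (map_poly (@meval K A f m) p).[f m].
Proof.
rewrite (@horner_coef_wide _ (size p)) ?size_map_leq //= .
by apply: eq_bigr => k _; rewrite coef_map_id0 //; exact: meval0.
Qed.

Lemma mevalM f n (u v : mpoly K n) :
  (forall i j, (i < n)%N -> (j < n)%N -> f i * f j = f j * f i) ->
  meval f (u * v) = meval f u * meval f v.
Proof.
elim: n u v => [|m IH] u v H; first by rewrite /= -scalerAl mul1r scalerA.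
have H' : forall i j, (i < m)%N -> (j < m)%N -> f i * f j = f j * f i.
  by move=> i j ??; apply: H; exact: ltnW.
rewrite !meval_horner mapM ?hornerM_comm //.
- apply: comm_coef_poly => k; rewrite coef_map_id0 ?meval0 //.
  by apply/esym/comm_meval => j lt; apply: H => //; exact: ltnW.
- exact: meval0.
- exact: mevalD.
- by move=> a b; apply: IH.
Qed.

Lemma meval_ms f n j (u : mpoly K n) :
  meval f (msubst0 j u) = meval (fun k => if k == j then 0 else f k) u.
Proof.
elim: n u => [//|m IH] u; simpl msubst0; case: (eqVneq j m) => [ejm|jm].
  rewrite [RHS](@meval_wide _ _ _ (size u).+1) // big_ord_recl expr0 mulr1.
  have mj : (m == j) = true by rewrite ejm eqxx.
  rewrite big1 ?addr0; last by move=> k _; rewrite mj expr0n /= mulr0.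
  rewrite (@meval_wide _ _ _ 1) ?size_polyC_leq1 // big_ord1 coefC /= expr0 mulr1.
  apply: meval_ext => k lt; case: ifP => // /eqP kj.
  by move: lt; rewrite kj ejm ltnn.
rewrite (@meval_wide _ _ _ (size u)) ?size_map_leq //=.
apply: eq_bigr => k _; rewrite coef_map_id0 ?IH ?(negbTE (negbT _)) //; last exact: ms0.
by rewrite eq_sym (negbTE jm).
Qed.

Lemma meval_hom (B : algType K) (phi : A -> B) f n (p : mpoly K n) :
  is_alg_hom phi -> phi (meval f p) = meval (phi \o f) p.
Proof.
move=> [hD hM h1 hZ].
have h0 : phi 0 = 0 by apply: (addIr (phi 0)); rewrite -hD !add0r.
have hS : forall (I : Type) (r : seq I) (F : I -> A), phi (\sum_(i <- r) F i) = \sum_(i <- r) phi (F i).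
  by move=> I r F; elim: r => [|a r IHr]; rewrite ?big_nil // !big_cons hD IHr.
have hX : forall a k, phi (a ^+ k) = phi a ^+ k.
  by move=> a; elim=> [|k IHk]; rewrite ?expr0 // !exprS hM IHk.
elim: n p => [|m IH] p /=; first by rewrite hZ h1.
by rewrite hS; apply: eq_bigr => k _; rewrite hM hX IH.
Qed.
End Meval.
End MP.

Definition MP (K : fieldType) (n : nat) : Type := mpoly K n.
HB.instance Definition _ (K : fieldType) (n : nat) := GRing.ComNzRing.copy (MP K n) (mpoly K n).

Section MPalg.
Variables (K : fieldType) (n : nat).
Definition mpscale (c : K) (v : MP K n) : MP K n := (mc n c : MP K n) * v.
Lemma mpscaleA a b v : mpscale a (mpscale b v) = mpscale (a * b) v.
Proof. by rewrite /mpscale mulrA mcM. Qed.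
Lemma mpscale1 : left_id 1 mpscale.
Proof. by move=> v; rewrite /mpscale mc1 mul1r. Qed.
Lemma mpscaleDr : right_distributive mpscale +%R.
Proof. by move=> c u v; rewrite /mpscale mulrDr. Qed.
Lemma mpscaleDl v : {morph mpscale^~ v : a b / a + b}.
Proof. by move=> a b; rewrite /mpscale mcD mulrDl. Qed.
HB.instance Definition _ := GRing.Zmodule_isLmodule.Build K (MP K n) mpscaleA mpscale1 mpscaleDr mpscaleDl.
Lemma mpscaleAl (a : K) (u v : MP K n) : a *: (u * v) = (a *: u) * v.
Proof. by rewrite /GRing.scale /= /mpscale mulrA. Qed.
HB.instance Definition _ := GRing.Lmodule_isLalgebra.Build K (MP K n) mpscaleAl.
Lemma mpscaleAr (a : K) (u v : MP K n) : a *: (u * v) = u * (a *: v).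
Proof. by rewrite /GRing.scale /= /mpscale mulrCA. Qed.
HB.instance Definition _ := GRing.Lalgebra_isAlgebra.Build K (MP K n) mpscaleAr.
Lemma mpscaleE (c : K) (v : MP K n) : c *: v = (mc n c : MP K n) * v.
Proof. by []. Qed.
End MPalg.

Section Lin.
Variables (K : fieldType) (V : algType K).

Record lin := Lin { lapp : V -> V;
  lappP : (forall u v, lapp (u + v) = lapp u + lapp v) /\ (forall (c : K) u, lapp (c *: u) = c *: lapp u) }.
Coercion lapp : lin >-> Funclass.

Lemma lin_ext (f g : lin) : lapp f =1 lapp g -> f = g.
Proof.
case: f g => [f pf] [g pg] /= H.
have e : f = g := functional_extensionality _ _ H.
subst g; by rewrite (proof_irrelevance _ pf pg).
Qed.

Definition lin_dec : comparable lin := fun f g => excluded_middle_informative (f = g).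
HB.instance Definition _ := comparableMixin lin_dec.

Definition lfind (P : pred lin) (k : nat) : option lin :=
  match excluded_middle_informative (exists f, P f) with
  | left h => Some (proj1_sig (constructive_indefinite_description _ h))
  | right _ => None end.
Lemma lfind_correct P k x : lfind P k = Some x -> P x.
Proof.
rewrite /lfind; case: excluded_middle_informative => // h [<-].
exact: (proj2_sig (constructive_indefinite_description _ h)).
Qed.
Lemma lfind_complete (P : pred lin) : (exists x, P x) -> exists k, lfind P k.
Proof. by move=> h; exists 0%N; rewrite /lfind; case: excluded_middle_informative. Qed.
Lemma lfind_ext (P Q : pred lin) : P =1 Q -> lfind P =1 lfind Q.
Proof. by move=> H k; have e : P = Q := functional_extensionality _ _ H; subst. Qed.
HB.instance Definition _ := hasChoice.Build lin lfind_correct lfind_complete lfind_ext.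

Definition lzero : lin := @Lin (fun _ => 0) (conj (fun u v => esym (addr0 0)) (fun c u => esym (scaler0 _ c))).
Lemma ladd_subproof (f g : lin) :
  (forall u v, f (u + v) + g (u + v) = (f u + g u) + (f v + g v)) /\
  (forall (c : K) u, f (c *: u) + g (c *: u) = c *: (f u + g u)).
Proof.
case: f g => [f [fD fZ]] [g [gD gZ]] /=; split=> [u v|c u].
  by rewrite fD gD addrACA.
by rewrite fZ gZ scalerDr.
Qed.
Definition ladd (f g : lin) : lin := Lin (ladd_subproof f g).
Lemma lopp_subproof (f : lin) :
  (forall u v, - f (u + v) = - f u + - f v) /\ (forall (c : K) u, - f (c *: u) = c *: - f u).
Proof. case: f => [f [fD fZ]] /=; split=> [u v|c u]; first by rewrite fD opprD.
by rewrite fZ scalerN. Qed.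
Definition lopp (f : lin) : lin := Lin (lopp_subproof f).
Definition lone : lin := @Lin (fun v => v) (conj (fun u v => erefl) (fun c u => erefl)).
Lemma lmul_subproof (f g : lin) :
  (forall u v, f (g (u + v)) = f (g u) + f (g v)) /\
  (forall (c : K) u, f (g (c *: u)) = c *: f (g u)).
Proof. case: f g => [f [fD fZ]] [g [gD gZ]] /=; split=> [u v|c u]; first by rewrite gD fD.
by rewrite gZ fZ. Qed.
Definition lmul (f g : lin) : lin := Lin (lmul_subproof f g).
Lemma lscale_subproof (a : K) (f : lin) :
  (forall u v, a *: f (u + v) = a *: f u + a *: f v) /\
  (forall (c : K) u, a *: f (c *: u) = c *: (a *: f u)).
Proof. case: f => [f [fD fZ]] /=; split=> [u v|c u]; first by rewrite fD scalerDr.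
by rewrite fZ !scalerA mulrC. Qed.
Definition lscale (a : K) (f : lin) : lin := Lin (lscale_subproof a f).

Lemma laddA : associative ladd.
Proof. by move=> f g h; apply: lin_ext => v /=; rewrite addrA. Qed.
Lemma laddC : commutative ladd.
Proof. by move=> f g; apply: lin_ext => v /=; rewrite addrC. Qed.
Lemma ladd0 : left_id lzero ladd.
Proof. by move=> f; apply: lin_ext => v /=; rewrite add0r. Qed.
Lemma laddN : left_inverse lzero lopp ladd.
Proof. by move=> f; apply: lin_ext => v /=; rewrite addNr. Qed.
HB.instance Definition _ := GRing.isZmodule.Build lin laddA laddC ladd0 laddN.

Lemma lmulA : associative lmul.
Proof. by move=> f g h; apply: lin_ext. Qed.
Lemma lmul1 : left_id lone lmul.
Proof. by move=> f; apply: lin_ext. Qed.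
Lemma lmulr1 : right_id lone lmul.
Proof. by move=> f; apply: lin_ext. Qed.
Lemma lmulDl : left_distributive lmul ladd.
Proof. by move=> f g h; apply: lin_ext. Qed.
Lemma lmulDr : right_distributive lmul ladd.
Proof. by move=> f g h; apply: lin_ext => v /=; case: f => [f [fD fZ]] /=; rewrite fD. Qed.
Lemma lone_neq0 : lone != 0.
Proof.
apply/eqP=> e; have := congr1 (fun f => lapp f 1) e => /= /eqP.
by rewrite oner_eq0.
Qed.
HB.instance Definition _ := GRing.Zmodule_isNzRing.Build lin lmulA lmul1 lmulr1 lmulDl lmulDr lone_neq0.

Lemma lscaleA a b f : lscale a (lscale b f) = lscale (a * b) f.
Proof. by apply: lin_ext => v /=; rewrite scalerA. Qed.
Lemma lscale1 : left_id 1 lscale.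
Proof. by move=> f; apply: lin_ext => v /=; rewrite scale1r. Qed.
Lemma lscaleDr : right_distributive lscale +%R.
Proof. by move=> a f g; apply: lin_ext => v /=; rewrite scalerDr. Qed.
Lemma lscaleDl f : {morph lscale^~ f : a b / a + b}.
Proof. by move=> a b; apply: lin_ext => v /=; rewrite scalerDl. Qed.
HB.instance Definition _ := GRing.Zmodule_isLmodule.Build K lin lscaleA lscale1 lscaleDr lscaleDl.
Lemma lscaleAl (a : K) (f g : lin) : a *: (f * g) = (a *: f) * g.
Proof. by apply: lin_ext. Qed.
HB.instance Definition _ := GRing.Lmodule_isLalgebra.Build K lin lscaleAl.
Lemma lscaleAr (a : K) (f g : lin) : a *: (f * g) = f * (a *: g).
Proof. by apply: lin_ext => v /=; case: f => [f [fD fZ]] /=; rewrite fZ. Qed.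
HB.instance Definition _ := GRing.Lalgebra_isAlgebra.Build K lin lscaleAr.

Lemma lappD (f g : lin) v : lapp (f + g) v = lapp f v + lapp g v. Proof. by []. Qed.
Lemma lappN (f : lin) v : lapp (- f) v = - lapp f v. Proof. by []. Qed.
Lemma lapp0 v : lapp (0 : lin) v = 0. Proof. by []. Qed.
Lemma lappM (f g : lin) v : lapp (f * g) v = lapp f (lapp g v). Proof. by []. Qed.
Lemma lapp1 v : lapp (1 : lin) v = v. Proof. by []. Qed.
Lemma lappZ (a : K) (f : lin) v : lapp (a *: f) v = a *: lapp f v. Proof. by []. Qed.
Lemma lapp_add (f : lin) u v : lapp f (u + v) = lapp f u + lapp f v.
Proof. by case: f => [f [fD fZ]]. Qed.
Lemma lapp_scale (f : lin) (c : K) u : lapp f (c *: u) = c *: lapp f u.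
Proof. by case: f => [f [fD fZ]]. Qed.

Lemma Mul_subproof (a : V) :
  (forall u v, a * (u + v) = a * u + a * v) /\ (forall (c : K) u, a * (c *: u) = c *: (a * u)).
Proof. by split=> [u v|c u]; [rewrite mulrDr|rewrite scalerAr]. Qed.
Definition Mul (a : V) : lin := Lin (Mul_subproof a).
Lemma Mul_hom : is_alg_hom Mul.
Proof.
split=> [u v|u v||c u]; apply: lin_ext => w /=.
- by rewrite mulrDl.
- by rewrite mulrA.
- by rewrite mul1r.
- by rewrite scalerAl.
Qed.
End Lin.
Section MevalId.
Variable K : fieldType.

Lemma polyC_hom m : is_alg_hom (fun a : MP K m => (a%:P : MP K m.+1)).
Proof.
split=> [a b|a b||c a] /=.
- exact: polyCD.
- exact: polyCM.
- by [].
- by rewrite !mpscaleE /= polyCM.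
Qed.

Lemma meval_id n (p : mpoly K n) : meval (fun k => mvar K n k : MP K n) p = p.
Proof.
elim: n p => [|m IH] p; first by rewrite /= mpscaleE /= mulr1.
rewrite (@meval_wide _ _ _ _ _ (size p)) //.
have e : forall k : 'I_(size p), meval (fun k => mvar K m.+1 k : MP K m.+1) p`_k = (p`_k)%:P.
  move=> k; rewrite -{2}(IH p`_k).
  rewrite (@meval_hom K _ _ _ (fun k => mvar K m k : MP K m) m p`_k (polyC_hom m)).
  apply: meval_ext => j lt /=; by rewrite (ltn_eqF lt).
rewrite (eq_bigr _ (fun k _ => congr1 (fun z => z * _) (e k))) /=.
rewrite eqxx; apply/esym; rewrite -[LHS]coefK poly_def; apply: eq_bigr => k _.
by rewrite -mul_polyC.
Qed.
End MevalId.
Section HomLemmas.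
Variables (K : fieldType) (A B : algType K) (phi : A -> B).
Hypothesis hphi : is_alg_hom phi.
Lemma homD a b : phi (a + b) = phi a + phi b. Proof. by case: hphi. Qed.
Lemma homM a b : phi (a * b) = phi a * phi b. Proof. by case: hphi. Qed.
Lemma hom1 : phi 1 = 1. Proof. by case: hphi. Qed.
Lemma homZ c a : phi (c *: a) = c *: phi a. Proof. by case: hphi. Qed.
Lemma hom0 : phi 0 = 0.
Proof. by apply: (addIr (phi 0)); rewrite -homD !add0r. Qed.
Lemma homN a : phi (- a) = - phi a.
Proof. by apply: (addIr (phi a)); rewrite -homD !addNr hom0. Qed.
Lemma homB a b : phi (a - b) = phi a - phi b.
Proof. by rewrite homD homN. Qed.
Lemma hom_prod (I : Type) (r : seq I) (F : I -> A) :
  phi (\prod_(i <- r) F i) = \prod_(i <- r) phi (F i).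
Proof. by elim: r => [|a r IH]; rewrite ?big_nil ?hom1 // !big_cons homM IH. Qed.
Lemma hom_sum (I : Type) (r : seq I) (F : I -> A) :
  phi (\sum_(i <- r) F i) = \sum_(i <- r) phi (F i).
Proof. by elim: r => [|a r IH]; rewrite ?big_nil ?hom0 // !big_cons homD IH. Qed.
End HomLemmas.

Lemma comp_hom (K : fieldType) (A B C : algType K) (f : A -> B) (g : B -> C) :
  is_alg_hom f -> is_alg_hom g -> is_alg_hom (fun a => g (f a)).
Proof.
move=> hf hg; split=> [a b|a b||c a]; by rewrite ?(homD hf) ?(homD hg) ?(homM hf) ?(homM hg)
  ?(hom1 hf) ?(hom1 hg) ?(homZ hf) ?(homZ hg).
Qed.

Lemma id_hom (K : fieldType) (A : algType K) : is_alg_hom (fun a : A => a).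
Proof. by []. Qed.

Section Rho.
Variables (K : fieldType) (n : nat).
Definition V := MP K n.
Definition Tm (i : 'I_n) : lin V := Mul (mvar K n i : V).
Lemma Dop_subproof (i : 'I_n) :
  (forall u v : V, (mdivX i (u + v) : V) = mdivX i u + mdivX i v) /\
  (forall (c : K) (u : V), (mdivX i (c *: u) : V) = c *: (mdivX i u : V)).
Proof. by split=> [u v|c u]; [exact: mdD|exact: md_mc]. Qed.
Definition Dop (i : 'I_n) : lin V := @Lin _ _ (fun v : V => (mdivX i v : V)) (Dop_subproof i).

Lemma jac_rho : jacobson_rel Tm Dop.
Proof.
split=> [i|i j ne]; first by apply: lin_ext => v /=; rewrite md_var_eq.
split; apply: lin_ext => v /=.
- by rewrite md_var_neq.
- by rewrite mulrCA.
- exact: md_comm.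
Qed.
End Rho.

Section SubAlg.
Variables (K : fieldType) (V : algType K) (S : V -> Prop).
Definition closedS := [/\ S 1, (forall a b, S a -> S b -> S (a + b)), (forall a, S a -> S (- a)),
  (forall a b, S a -> S b -> S (a * b)) & (forall (c : K) a, S a -> S (c *: a))].
Variable hS : closedS.
Let S1 : S 1. Proof. by case: hS. Qed.
Let SD : forall a b, S a -> S b -> S (a + b). Proof. by case: hS. Qed.
Let SN : forall a, S a -> S (- a). Proof. by case: hS. Qed.
Let SM : forall a b, S a -> S b -> S (a * b). Proof. by case: hS. Qed.
Let SZ : forall (c : K) a, S a -> S (c *: a). Proof. by case: hS. Qed.

Record subR := MkSub { sv : V; svP : S sv }.
Definition sub (_ : closedS) := subR.

Lemma sub_ext (f g : sub hS) : sv f = sv g -> f = g.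
Proof.
case: f g => [f pf] [g pg] /= e; subst g; by rewrite (proof_irrelevance _ pf pg).
Qed.

Definition sub_dec : comparable (sub hS) := fun f g => excluded_middle_informative (f = g).
HB.instance Definition _ := comparableMixin sub_dec.

Definition sfind (Q : pred (sub hS)) (k : nat) : option (sub hS) :=
  match excluded_middle_informative (exists f, Q f) with
  | left h => Some (proj1_sig (constructive_indefinite_description _ h))
  | right _ => None end.
Lemma sfind_correct Q k z : sfind Q k = Some z -> Q z.
Proof.
rewrite /sfind; case: excluded_middle_informative => // h [<-].
exact: (proj2_sig (constructive_indefinite_description _ h)).
Qed.
Lemma sfind_complete (Q : pred (sub hS)) : (exists z, Q z) -> exists k, sfind Q k.
Proof. by move=> h; exists 0%N; rewrite /sfind; case: excluded_middle_informative. Qed.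
Lemma sfind_ext (Q R : pred (sub hS)) : Q =1 R -> sfind Q =1 sfind R.
Proof. by move=> H k; have e : Q = R := functional_extensionality _ _ H; subst. Qed.
HB.instance Definition _ := hasChoice.Build (sub hS) sfind_correct sfind_complete sfind_ext.

Let S0 : S 0. Proof. by rewrite -(addrN 1); apply: SD => //; exact: SN. Qed.
Definition szero : sub hS := MkSub S0.
Definition sadd (f g : sub hS) : sub hS := MkSub (SD (svP f) (svP g)).
Definition sopp (f : sub hS) : sub hS := MkSub (SN (svP f)).
Definition sone : sub hS := MkSub S1.
Definition smul (f g : sub hS) : sub hS := MkSub (SM (svP f) (svP g)).
Definition sscale (c : K) (f : sub hS) : sub hS := MkSub (SZ c (svP f)).

Lemma saddA : associative sadd. Proof. by move=> *; apply: sub_ext; rewrite /= addrA. Qed.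
Lemma saddC : commutative sadd. Proof. by move=> *; apply: sub_ext; rewrite /= addrC. Qed.
Lemma sadd0 : left_id szero sadd. Proof. by move=> *; apply: sub_ext; rewrite /= add0r. Qed.
Lemma saddN : left_inverse szero sopp sadd. Proof. by move=> *; apply: sub_ext; rewrite /= addNr. Qed.
HB.instance Definition _ := GRing.isZmodule.Build (sub hS) saddA saddC sadd0 saddN.
Lemma smulA : associative smul. Proof. by move=> *; apply: sub_ext; rewrite /= mulrA. Qed.
Lemma smul1 : left_id sone smul. Proof. by move=> *; apply: sub_ext; rewrite /= mul1r. Qed.
Lemma smulr1 : right_id sone smul. Proof. by move=> *; apply: sub_ext; rewrite /= mulr1. Qed.
Lemma smulDl : left_distributive smul sadd. Proof. by move=> *; apply: sub_ext; rewrite /= mulrDl. Qed.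
Lemma smulDr : right_distributive smul sadd. Proof. by move=> *; apply: sub_ext; rewrite /= mulrDr. Qed.
Lemma sone_neq0 : sone != szero.
Proof. by apply/eqP=> /(congr1 sv) /= /eqP; rewrite oner_eq0. Qed.
HB.instance Definition _ := GRing.Zmodule_isNzRing.Build (sub hS) smulA smul1 smulr1 smulDl smulDr sone_neq0.
Lemma sscaleA a b f : sscale a (sscale b f) = sscale (a * b) f.
Proof. by apply: sub_ext; rewrite /= scalerA. Qed.
Lemma sscale1 : left_id 1 sscale. Proof. by move=> *; apply: sub_ext; rewrite /= scale1r. Qed.
Lemma sscaleDr : right_distributive sscale +%R.
Proof. by move=> *; apply: sub_ext; rewrite /= scalerDr. Qed.
Lemma sscaleDl f : {morph sscale^~ f : a b / a + b}.
Proof. by move=> *; apply: sub_ext; rewrite /= scalerDl. Qed.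
HB.instance Definition _ := GRing.Zmodule_isLmodule.Build K (sub hS) sscaleA sscale1 sscaleDr sscaleDl.
Lemma sscaleAl (a : K) (f g : sub hS) : a *: (f * g) = (a *: f) * g.
Proof. by apply: sub_ext; rewrite /= scalerAl. Qed.
HB.instance Definition _ := GRing.Lmodule_isLalgebra.Build K (sub hS) sscaleAl.
Lemma sscaleAr (a : K) (f g : sub hS) : a *: (f * g) = f * (a *: g).
Proof. by apply: sub_ext; rewrite /= scalerAr. Qed.
HB.instance Definition _ := GRing.Lalgebra_isAlgebra.Build K (sub hS) sscaleAr.

Lemma sval_hom : is_alg_hom (sv : sub hS -> V).
Proof. by []. Qed.
End SubAlg.

Lemma svM (K : fieldType) (V : algType K) (S : V -> Prop) (hS : closedS S) (f g : sub hS) : sv (f * g) = sv f * sv g.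
Proof. by []. Qed.
Lemma sv1 (K : fieldType) (V : algType K) (S : V -> Prop) (hS : closedS S) : sv (1 : sub hS) = 1.
Proof. by []. Qed.
Section Main.
Variables (K : fieldType) (n : nat) (A : algType K) (x y : 'I_n -> A).
Hypothesis hA : is_Sn x y.
Let hJ : jacobson_rel x y := proj1 hA.

Definition X : nat -> A := ext x.
Definition P (a : mpoly K n) : A := meval X a.
Definition e (i : 'I_n) : A := locked (1 - x i * y i).
Lemma eE i : e i = 1 - x i * y i. Proof. by rewrite /e -lock. Qed.

Lemma XE (i : 'I_n) : X i = x i.
Proof. by rewrite /X /ext valK. Qed.
Lemma XO k : ~~ (k < n)%N -> X k = 0.
Proof. by move=> h; rewrite /X /ext insubF //; exact: negbTE. Qed.

Lemma yx i : y i * x i = 1. Proof. by case: hJ. Qed.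
Lemma xy_c i j : i != j -> x i * y j = y j * x i.
Proof. by case: hJ => _ H /H []. Qed.
Lemma xx_c i j : x i * x j = x j * x i.
Proof. by case: (eqVneq i j) => [->//|/(proj2 hJ) []]. Qed.
Lemma yy_c i j : y i * y j = y j * y i.
Proof. by case: (eqVneq i j) => [->//|/(proj2 hJ) []]. Qed.

Lemma X_comm i j : (i < n)%N -> (j < n)%N -> X i * X j = X j * X i.
Proof. by move=> hi hj; rewrite -[i]/(val (Ordinal hi)) -[j]/(val (Ordinal hj)) !XE xx_c. Qed.

Lemma PD a b : P (a + b) = P a + P b. Proof. exact: mevalD. Qed.
Lemma PB a b : P (a - b) = P a - P b. Proof. exact: mevalB. Qed.
Lemma PN a : P (- a) = - P a. Proof. exact: mevalN. Qed.
Lemma P0 : P 0 = 0. Proof. exact: meval0. Qed.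
Lemma P1 : P 1 = 1. Proof. exact: meval1. Qed.
Lemma PM a b : P (a * b) = P a * P b. Proof. by apply: mevalM => i j; exact: X_comm. Qed.
Lemma Pvar (i : 'I_n) : P (mvar K n i) = x i. Proof. by rewrite /P meval_var // XE. Qed.
Lemma Pmc c : P (mc n c) = c%:A. Proof. exact: meval_mc. Qed.

Lemma comm_P (z : A) a : (forall i, z * x i = x i * z) -> z * P a = P a * z.
Proof. move=> H; apply: comm_meval => k hk; by rewrite -[k]/(val (Ordinal hk)) XE. Qed.

Lemma x_P i a : x i * P a = P a * x i.
Proof. by apply: comm_P => j; rewrite xx_c. Qed.

Lemma comm_Pms (z : A) (i : 'I_n) a : (forall j, j != i -> z * x j = x j * z) ->
  z * P (msubst0 i a) = P (msubst0 i a) * z.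
Proof.
move=> H; rewrite /P meval_ms; apply: comm_meval => k hk.
case: ifP => [_|/negbT ki]; first by rewrite mul0r mulr0.
rewrite -[k]/(val (Ordinal hk)) XE; apply: H; apply: contra ki => /eqP <-; by [].
Qed.

Lemma y_Pms i a : y i * P (msubst0 i a) = P (msubst0 i a) * y i.
Proof. by apply: comm_Pms => j ji; rewrite xy_c. Qed.

Lemma P_decomp (i : 'I_n) a : P a = P (msubst0 i a) + x i * P (mdivX i a).
Proof. by rewrite -{1}(decomp i a) PD PM Pvar. Qed.

Lemma y_P i a : y i * P a = P (msubst0 i a) * y i + P (mdivX i a).
Proof. by rewrite {1}(P_decomp i a) mulrDr y_Pms mulrA yx mul1r. Qed.

Lemma ex i : e i * x i = 0.
Proof. by rewrite eE mulrBl mul1r -mulrA yx mulr1 subrr. Qed.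
Lemma ye i : y i * e i = 0.
Proof. by rewrite eE mulrBr mulr1 mulrA yx mul1r subrr. Qed.
Lemma ee i : e i * e i = e i.
Proof. by rewrite {1}eE mulrBl mul1r -mulrA ye mulr0 subr0. Qed.
Lemma e_x i j : i != j -> e i * x j = x j * e i.
Proof.
move=> ne; rewrite eE mulrBl mulrBr mul1r mulr1 -mulrA -xy_c 1?eq_sym //.
by rewrite !mulrA xx_c.
Qed.
Lemma e_y i j : i != j -> e i * y j = y j * e i.
Proof.
move=> ne; by rewrite eE mulrBl mulrBr mul1r mulr1 mulrA -xy_c // -!mulrA yy_c.
Qed.
Lemma e_e i j : e i * e j = e j * e i.
Proof.
case: (eqVneq i j) => [->//|ne].
rewrite [e j]eE mulrBr mulr1 mulrA e_x // -mulrA e_y // mulrA.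
by rewrite mulrBl mul1r.
Qed.

Lemma e_Pms i a : e i * P (msubst0 i a) = P (msubst0 i a) * e i.
Proof.
apply: comm_Pms => j ji; by rewrite e_x // eq_sym.
Qed.
Lemma e_P i a : e i * P a = P (msubst0 i a) * e i.
Proof. by rewrite {1}(P_decomp i a) mulrDr mulrA ex mul0r addr0 e_Pms. Qed.
Lemma rearr (V : zmodType) (a1 b1 c1 d1 f1 g1 h1 : V) :
  a1 + (b1 + c1) + (d1 + (f1 - g1)) + h1 = a1 + (b1 + d1) + (c1 + f1) + (h1 - g1).
Proof.
rewrite -!addrA; do 2 congr (_ + _); rewrite addrCA; do 3 congr (_ + _).
by rewrite addrC.
Qed.

Lemma rr (V : zmodType) (u v w z : V) : (u - v) - (w - z) = - v + z + u - w.
Proof. rewrite opprB [u - v]addrC -!addrA; congr (_ + _); exact: addrCA. Qed.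

Lemma mdB m j (u v : mpoly K m) : mdivX j (u - v) = mdivX j u - mdivX j v.
Proof.
have hN : mdivX j (- v) = - mdivX j v.
  by apply/eqP; rewrite -subr_eq0 opprK -mdD addNr md0.
by rewrite mdD hN.
Qed.

Lemma YY (i j : 'I_n) a b : i != j ->
  (y i + P a * e i) * (y j + P b * e j) =
  y i * y j + (P (msubst0 i b) * y i * e j + P (msubst0 j a) * y j * e i)
  + (P (mdivX i b) * e j + P (mdivX j a) * e i)
  + P (a * msubst0 i b - mdivX j a) * (e i * e j).
Proof.
move=> ne.
have t2 : y i * (P b * e j) = P (msubst0 i b) * y i * e j + P (mdivX i b) * e j.
  by rewrite mulrA y_P mulrDl.
have t3 : P a * e i * y j = P (msubst0 j a) * y j * e i + (P (mdivX j a) * e i - P (mdivX j a) * (e i * e j)).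
  rewrite -mulrA e_y // mulrA (P_decomp j a) mulrDl mulrDl x_P -(mulrA _ (x j)).
  have -> : x j * y j = 1 - e j by rewrite eE opprB addrC subrK.
  by rewrite mulrBr mulr1 mulrBl -[_ * e j * e i]mulrA e_e.
have t4 : P a * e i * (P b * e j) = P (a * msubst0 i b) * (e i * e j).
  by rewrite -mulrA (mulrA (e i)) e_P PM !mulrA.
rewrite mulrDl !mulrDr t2 t3 t4 addrA rearr.
by rewrite PB mulrBl.
Qed.

Definition Qadm (i j : 'I_n) (a b : mpoly K n) : mpoly K n :=
  - mdivX j (a - msubst0 j a) + mdivX i (b - msubst0 i b) + a * msubst0 i b - b * msubst0 j a.

Lemma commY (i j : 'I_n) a b : i != j ->
  (y i + P a * e i) * (y j + P b * e j) - (y j + P b * e j) * (y i + P a * e i) =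
  P (Qadm i j a b) * (e i * e j).
Proof.
move=> ne; rewrite YY // YY 1?eq_sym // yy_c e_e.
rewrite [_ * y i * e j + _]addrC [P (mdivX i b) * e j + _]addrC.
rewrite opprD addrACA subrr add0r -mulrBl -PB.
congr (P _ * _); rewrite /Qadm !mdB !md_ms // !subr0.
exact: rr.
Qed.

Lemma univ_ex (B : algType K) (xb yb : 'I_n -> B) : jacobson_rel xb yb ->
  { f : A -> B | is_alg_hom f /\ forall i, f (x i) = xb i /\ f (y i) = yb i }.
Proof.
move=> h; apply: constructive_indefinite_description.
exact: (proj1 (proj2 hA B xb yb h)).
Qed.

Lemma univ_uniq (B : algType K) (f g : A -> B) : is_alg_hom f -> is_alg_hom g ->
  (forall i, f (x i) = g (x i) /\ f (y i) = g (y i)) -> forall a, f a = g a.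
Proof.
move=> hf hg H.
have hj : jacobson_rel (fun i => f (x i)) (fun i => f (y i)).
  case: hJ => h1 h2; split=> [i|i j ne]; first by rewrite -(homM hf) h1 (hom1 hf).
  by case: (h2 i j ne) => a b c; split; rewrite -!(homM hf) ?a ?b ?c.
exact: (proj2 (proj2 hA B _ _ hj) f g hf hg H).
Qed.
Definition rho : A -> lin (V K n) := sval (univ_ex (jac_rho K n)).
Lemma rho_hom : is_alg_hom rho. Proof. exact: (proj1 (svalP (univ_ex (jac_rho K n)))). Qed.
Lemma rho_x i : rho (x i) = Tm K i. Proof. exact: (proj1 (proj2 (svalP (univ_ex (jac_rho K n))) i)). Qed.
Lemma rho_y i : rho (y i) = Dop K i. Proof. exact: (proj2 (proj2 (svalP (univ_ex (jac_rho K n))) i)). Qed.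

Lemma rho_P a : rho (P a) = Mul (a : V K n).
Proof.
rewrite /P (meval_hom _ _ rho_hom).
rewrite (meval_ext (g := fun k => Mul (mvar K n k : V K n)) a); last first.
  by move=> k hk /=; rewrite -[k]/(val (Ordinal hk)) XE rho_x.
rewrite -(meval_hom (fun k => mvar K n k : V K n) a (@Mul_hom K (V K n))).
by rewrite (meval_id (n := n) a).
Qed.

Lemma rhoP a v : lapp (rho (P a)) v = (a : V K n) * v.
Proof. by rewrite rho_P. Qed.

Lemma rho_e i v : lapp (rho (e i)) v = msubst0 i v.
Proof.
rewrite eE (homB rho_hom) (hom1 rho_hom) (homM rho_hom) rho_x rho_y /=.
by rewrite -{1}(decomp i v) addrK.
Qed.

Lemma lapp_eq (f g : lin (V K n)) v : f = g -> lapp f v = lapp g v.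
Proof. by move=> ->. Qed.

Lemma P_e_eq0 r i : P r * e i = 0 -> r = 0.
Proof.
move=> /(congr1 rho) /(lapp_eq 1); rewrite (homM rho_hom) (hom0 rho_hom) lappM rho_e rhoP.
by rewrite ms1 mulr1.
Qed.

Lemma P_ee_eq0 r i j : P r * (e i * e j) = 0 -> r = 0.
Proof.
move=> /(congr1 rho) /(lapp_eq 1); rewrite !(homM rho_hom) (hom0 rho_hom) !lappM !rho_e rhoP.
by rewrite !ms1 mulr1.
Qed.
Definition Ys (s : seq 'I_n) : A := \prod_(i <- s) y i.
Definition SP (a : A) : Prop :=
  exists L : seq (mpoly K n * seq 'I_n), a = \sum_(pr <- L) P pr.1 * Ys pr.2.

Lemma SP0 : SP 0. Proof. by exists [::]; rewrite big_nil. Qed.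
Lemma SPD a b : SP a -> SP b -> SP (a + b).
Proof. by move=> [L ->] [L' ->]; exists (L ++ L'); rewrite big_cat. Qed.
Lemma SP_P c a : SP a -> SP (P c * a).
Proof.
move=> [L ->]; exists [seq (c * pr.1, pr.2) | pr <- L].
by rewrite big_map mulr_sumr; apply: eq_bigr => pr _; rewrite /= PM mulrA.
Qed.
Lemma SP_y i a : SP a -> SP (y i * a).
Proof.
move=> [L ->]; exists (flatten [seq [:: (msubst0 i pr.1, i :: pr.2); (mdivX i pr.1, pr.2)] | pr <- L]).
rewrite big_flatten big_map mulr_sumr; apply: eq_bigr => pr _.
by rewrite !big_cons big_nil /= addr0 mulrA y_P mulrDl /Ys big_cons mulrA.
Qed.
Lemma SP_Ys s a : SP a -> SP (Ys s * a).
Proof.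
elim: s => [|i s IH] h; first by rewrite /Ys big_nil mul1r.
by rewrite /Ys big_cons -mulrA; apply: SP_y; exact: IH.
Qed.
Lemma SPM a b : SP a -> SP b -> SP (a * b).
Proof.
move=> [L ->] hb; rewrite mulr_suml; elim: L => [|pr L IH]; first by rewrite big_nil; exact: SP0.
rewrite big_cons; apply: SPD => //; rewrite -mulrA; apply: SP_P; exact: SP_Ys.
Qed.
Lemma SP1 : SP 1.
Proof. by exists [:: (1, [::])]; rewrite big_cons big_nil addr0 /= P1 /Ys big_nil mulr1. Qed.
Lemma SPN a : SP a -> SP (- a).
Proof. by move=> h; rewrite -mulN1r -P1 -PN; apply: SP_P. Qed.
Lemma SPZ (c : K) a : SP a -> SP (c *: a).
Proof. by move=> h; rewrite -mulr_algl -Pmc; apply: SP_P. Qed.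
Lemma SPx i : SP (x i).
Proof. by rewrite -(mulr1 (x i)) -Pvar; apply: SP_P; exact: SP1. Qed.
Lemma SPy i : SP (y i).
Proof. by rewrite -(mulr1 (y i)); apply: SP_y; exact: SP1. Qed.

Lemma SP_all a : SP a.
Proof.
have hS : closedS SP by split; [exact: SP1|exact: SPD|exact: SPN|exact: SPM|exact: SPZ].
pose SA := sub hS.
pose xs i : SA := @MkSub K A SP (x i) (SPx i).
pose ys i : SA := @MkSub K A SP (y i) (SPy i).
have hj : jacobson_rel xs ys.
  split=> [i|i j ne]; first by apply: sub_ext; rewrite svM sv1; exact: yx.
  split; apply: sub_ext; rewrite !svM.
  - exact: xy_c.
  - exact: xx_c.
  - exact: yy_c.
have [f [hf hfxy]] := univ_ex hj.
have hg := comp_hom hf (sval_hom hS).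
have := univ_uniq hg (id_hom A) _ a.
move=> /(_ _) <-; first exact: svP.
by move=> i; case: (hfxy i) => -> ->.
Qed.
Lemma Ys_rem s a : a \in s -> Ys s = y a * Ys (rem a s).
Proof.
elim: s => [//|b s IH]; rewrite inE /= => /orP[/eqP <-|ins].
  by rewrite eqxx /Ys big_cons.
case: (eqVneq b a) => [-> | ba]; first by rewrite /Ys big_cons.
by rewrite /Ys !big_cons -/(Ys s) IH // /Ys mulrA yy_c -mulrA.
Qed.

Lemma Ys_perm s s' : perm_eq s s' -> Ys s = Ys s'.
Proof.
elim: s s' => [|a s IH] s' hp.
  by case: s' hp => // b s' /perm_size.
have ain : a \in s' by rewrite -(perm_mem hp) mem_head.
rewrite (Ys_rem ain) /Ys big_cons -/(Ys s) (IH (rem a s')) //.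
by rewrite -(perm_cons a); exact: (perm_trans hp (perm_to_rem ain)).
Qed.

Definition cnt (s : seq 'I_n) (j : 'I_n) : nat := count_mem j s.

Lemma mono_ext (c d : 'I_n -> nat) : c =1 d -> mono K c = mono K d.
Proof. by move=> h; apply: eq_bigr => i _; rewrite h. Qed.

Lemma rho_Ys_mono s (c : 'I_n -> nat) :
  lapp (rho (Ys s)) (mono K c) =
  if [forall j, cnt s j <= c j]%N then mono K (fun j => c j - cnt s j)%N else 0.
Proof.
elim: s => [|i s IH].
  rewrite /Ys big_nil (hom1 rho_hom) /=.
  have -> : [forall j, cnt [::] j <= c j]%N by apply/forallP.
  by apply: mono_ext => j; rewrite subn0.
rewrite /Ys big_cons (homM rho_hom) lappM -/(Ys s) IH rho_y /=.
case: ifP => [/forallP H|/negbT H].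
  rewrite md_mono; case: ifP => [lt|/negbT lt].
    have -> : [forall j, cnt (i :: s) j <= c j]%N.
      apply/forallP=> j; rewrite /cnt /= -/(cnt s j).
      case: (eqVneq i j) => [<-|ij]; first by rewrite add1n -subn_gt0.
      by rewrite add0n H.
    apply: mono_ext => j; rewrite /decr /cnt /= -/(cnt s j).
    case: (eqVneq j i) => [->|ji]; first by rewrite ?eqxx add1n subnS.
    by rewrite ?add0n.
  have -> : [forall j, cnt (i :: s) j <= c j]%N = false.
    apply/negbTE/forallP=> /(_ i); rewrite /cnt /= eqxx add1n -/(cnt s i).
    by rewrite -subn_gt0 (negbTE lt).
  by [].
have -> : [forall j, cnt (i :: s) j <= c j]%N = false.
  apply/negbTE; apply: contra H => /forallP H; apply/forallP=> j.
  by apply: leq_trans (H j); rewrite /cnt /= leq_addl.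
exact: md0.
Qed.

Lemma perm_of_cnt (s s0 : seq 'I_n) :
  (forall j, cnt s j <= cnt s0 j)%N -> (size s0 <= size s)%N -> perm_eq s s0.
Proof.
move=> H hs; have [s' ss' ps] := (proj1 (count_subseqP s s0)) H.
have hsz := size_subseq ss'.
have e : size s' = size s0.
  by apply/eqP; rewrite eqn_leq hsz (leq_trans hs) // (perm_size ps).
have [_] := size_subseq_leqif ss'; rewrite e eqxx => /esym/eqP es.
by rewrite -es.
Qed.

Lemma min_exists (T : eqType) (f : T -> nat) (L : seq T) : L != [::] ->
  exists2 t, t \in L & forall u, u \in L -> (f t <= f u)%N.
Proof.
elim: L => [//|a L IH] _; case: (eqVneq L [::]) => [->|nL].
  by exists a; rewrite ?mem_head // => u; rewrite inE => /eqP ->.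
have [t tin tmin] := IH nL.
case: (leqP (f a) (f t)) => [le|lt].
  exists a; rewrite ?mem_head // => u; rewrite inE => /orP[/eqP->//|uin].
  by apply: leq_trans le (tmin u uin).
exists t; first by rewrite inE tin orbT.
move=> u; rewrite inE => /orP[/eqP->|uin]; [exact: ltnW|exact: tmin].
Qed.

Lemma lapp_sum (I : Type) (r : seq I) (F : I -> lin (V K n)) v :
  lapp (\sum_(i <- r) F i) v = \sum_(i <- r) lapp (F i) v.
Proof. by elim: r => [|a r IH]; rewrite ?big_nil // !big_cons lappD IH. Qed.

Lemma P_sum (I : Type) (r : seq I) (Q : pred I) (F : I -> mpoly K n) :
  P (\sum_(i <- r | Q i) F i) = \sum_(i <- r | Q i) P (F i).
Proof. exact: (big_morph P PD P0). Qed.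

Lemma Vsum (I : Type) (r : seq I) (Q : pred I) (F : I -> mpoly K n) :
  \sum_(i <- r | Q i) F i = (\sum_(i <- r | Q i) (F i : V K n) : mpoly K n).
Proof. by elim: r => [|a r IH]; rewrite ?big_nil // !big_cons IH. Qed.

Lemma mono0 : mono K (fun _ : 'I_n => 0%N) = 1.
Proof. by rewrite /mono big1. Qed.

Lemma faithful (L : seq (mpoly K n * seq 'I_n)) :
  rho (\sum_(pr <- L) P pr.1 * Ys pr.2) = 0 -> \sum_(pr <- L) P pr.1 * Ys pr.2 = 0.
Proof.
have [N] := ubnP (size L); elim: N L => // N IH L hsz h0.
case: (eqVneq L [::]) => [->|nL]; first by rewrite big_nil.
have [pr0 in0 min0] := min_exists (fun pr : mpoly K n * seq 'I_n => size pr.2) nL.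
set s0 := pr0.2; set q := fun pr : mpoly K n * seq 'I_n => perm_eq pr.2 s0.
have hsum : \sum_(pr <- L | q pr) (pr.1 : V K n) = 0.
  have := lapp_eq (mono K (cnt s0)) h0; rewrite (hom_sum rho_hom) lapp_sum lapp0 => h.
  apply: (etrans _ h); rewrite big_mkcond /=; apply: eq_big_seq => pr prin.
  rewrite (homM rho_hom) lappM rho_Ys_mono rhoP.
  case: ifP => [qp|/negbT qp].
    have hc : forall j, cnt pr.2 j = cnt s0 j by move=> j; exact: (permP qp).
    have -> : [forall j, cnt pr.2 j <= cnt s0 j]%N by apply/forallP=> j; rewrite hc.
    by rewrite (mono_ext (d := fun _ => 0%N)) ?mono0 ?mulr1 // => j; rewrite hc subnn.
  case: ifP => [/forallP hle|_]; last by rewrite mulr0.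
  by move: qp; rewrite /q (perm_of_cnt hle (min0 pr prin)).
rewrite (bigID q) /=.
have -> : \sum_(pr <- L | q pr) P pr.1 * Ys pr.2 = 0.
  rewrite (eq_bigr (fun pr => P pr.1 * Ys s0)); last by move=> pr qp; rewrite (Ys_perm qp).
  by rewrite -mulr_suml -P_sum Vsum hsum P0 mul0r.
rewrite add0r -big_filter; apply: IH.
  rewrite size_filter; rewrite -(count_predC q L) in hsz.
  have : (0 < count q L)%N by rewrite -has_count; apply/hasP; exists pr0 => //; exact: perm_refl.
  move=> h1; rewrite ltnS in hsz; apply: leq_trans hsz; by rewrite -add1n leq_add2r.
move: h0; rewrite (bigID q) /= (homD rho_hom).
have -> : \sum_(pr <- L | q pr) P pr.1 * Ys pr.2 = 0.
  rewrite (eq_bigr (fun pr => P pr.1 * Ys s0)); last by move=> pr qp; rewrite (Ys_perm qp).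
  by rewrite -mulr_suml -P_sum Vsum hsum P0 mul0r.
by rewrite (hom0 rho_hom) add0r big_filter.
Qed.

Lemma rho_inj a : rho a = 0 -> a = 0.
Proof. by have [L ->] := SP_all a; exact: faithful. Qed.
Definition E : A := \prod_(i < n) e i.

Lemma e_prod_in i (r : seq 'I_n) : i \in r -> e i * \prod_(j <- r) e j = \prod_(j <- r) e j.
Proof.
elim: r => [//|a r IH]; rewrite inE big_cons => /orP[/eqP <-|ir].
  by rewrite mulrA ee.
by rewrite mulrA e_e -mulrA IH.
Qed.

Lemma eE_fix i : e i * E = E.
Proof. by apply: e_prod_in; exact: mem_index_enum. Qed.

Lemma ev0N m (u : mpoly K m) : ev0 (- u) = - ev0 u.
Proof. by apply/eqP; rewrite -subr_eq0 opprK -ev0D addNr ev0_0. Qed.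
Lemma ev0B m (u v : mpoly K m) : ev0 (u - v) = ev0 u - ev0 v.
Proof. by rewrite ev0D ev0N. Qed.

Lemma ev0_rho_prod (r : seq 'I_n) (F : 'I_n -> A) u :
  (forall j v, ev0 (lapp (rho (F j)) v) = ev0 v) ->
  ev0 (lapp (rho (\prod_(j <- r) F j)) u) = ev0 u.
Proof.
move=> H; elim: r => [|a r IH]; first by rewrite big_nil (hom1 rho_hom).
by rewrite big_cons (homM rho_hom) lappM H IH.
Qed.

Lemma rhoE u : lapp (rho E) u = mc n (ev0 u).
Proof.
have -> : ev0 u = ev0 (lapp (rho E) u).
  by rewrite ev0_rho_prod // => j v; rewrite rho_e ev0_ms.
apply: fix_const => j hj.
have := lapp_eq u (congr1 rho (eE_fix (Ordinal hj))).
by rewrite (homM rho_hom) lappM rho_e.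
Qed.

Lemma aPvE a (v : mpoly K n) : a * P v * E = P (lapp (rho a) v) * E.
Proof.
apply/eqP; rewrite -subr_eq0; apply/eqP; apply: rho_inj.
rewrite (homB rho_hom) !(homM rho_hom); apply: lin_ext => u.
rewrite lappD lappN !lappM rhoE !rhoP lapp0 -(mulrC (mc n (ev0 u))).
rewrite -mpscaleE lapp_scale mpscaleE mulrC.
exact: subrr.
Qed.

Lemma gP (g : A -> A) a : is_alg_hom g -> (forall i, g (x i) = x i) -> g (P a) = P a.
Proof.
move=> hg hgx; rewrite /P (meval_hom _ _ hg); apply: meval_ext => k hk /=.
by rewrite -[k]/(val (Ordinal hk)) XE hgx.
Qed.

Lemma st_inj (g : A -> A) : is_alg_hom g -> (forall i, g (x i) = x i) -> injective g.
Proof.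
move=> hg hgx a b gab; apply/eqP; rewrite -subr_eq0; apply/eqP.
set c := a - b.
have gc : g c = 0 by rewrite /c (homB hg) gab subrr.
case: (eqVneq c 0) => // cn0; exfalso.
have [v hv] : exists v, lapp (rho c) v != 0.
  apply: NNPP => hn; apply: (negP cn0); apply/eqP; apply: rho_inj; apply: lin_ext => v.
  by rewrite lapp0; apply/eqP; apply: negbNE; apply/negP => h; apply: hn; exists v.
set w := lapp (rho c) v.
have h1 : P w * g E = 0.
  by rewrite -(gP w hg hgx) -(homM hg) -aPvE !(homM hg) gc !mul0r.
have := lapp_eq 1 (congr1 rho h1).
rewrite (homM rho_hom) (hom0 rho_hom) lappM rhoP lapp0 => /mpoly_mul_eq0 [wz|rz].
  by move: hv; rewrite -/w wz eqxx.
have := ev0_0 K n; rewrite -rz /E (hom_prod hg) ev0_rho_prod ?ev0_1.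
  by move/eqP; rewrite oner_eq0.
move=> j u; rewrite eE (homB hg) (hom1 hg) (homM hg) hgx.
rewrite (homB rho_hom) (hom1 rho_hom) (homM rho_hom) rho_x lappD lappN lapp1 lappM /=.
by rewrite ev0B ev0_varM // subr0.
Qed.
Lemma unit_alg (R : comNzRingType) (t p q : R) :
  (1 - t * p) * (1 - t * q) = 1 - t * (p + q - t * p * q).
Proof.
rewrite mulrBr mulr1 mulrBl mul1r mulrBr mulrDr.
have -> : t * p * (t * q) = t * (t * p * q) by rewrite !mulrA [t * p * t]mulrAC.
rewrite !opprB opprD !addrA; congr (_ + _).
by rewrite addrAC.
Qed.

Lemma st_form (g : A -> A) : is_alg_hom g -> (forall i, g (x i) = x i) ->
  forall i, g (y i) = y i + P (lapp (rho (g (y i) - y i)) 1) * e i.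
Proof.
move=> hg hgx i; set b := g (y i) - y i; set r := lapp (rho b) 1.
suff -> : P r * e i = b by rewrite /b addrC subrK.
have hbx : b * x i = 0.
  by rewrite /b mulrBl -{1}(hgx i) -(homM hg) !yx (hom1 hg) subrr.
have hbxj : forall j, j != i -> b * x j = x j * b.
  move=> j ji; rewrite /b mulrBl mulrBr -{1}(hgx j) -(homM hg) -xy_c // (homM hg) hgx.
  by rewrite xy_c.
apply/eqP; rewrite -subr_eq0; apply/eqP; apply: rho_inj.
rewrite (homB rho_hom) (homM rho_hom); apply: lin_ext => v.
rewrite lappD lappN lappM rho_e rhoP lapp0.
set F := rho b.
pose gg := fun k => if k == val i then 0 else (mvar K n k : V K n).
have hms : (msubst0 i v : V K n) = meval gg v.
  by rewrite -{1}(meval_id (msubst0 i v)) meval_ms.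
have hFc : F * Mul (msubst0 i v : V K n) = Mul (msubst0 i v : V K n) * F.
  rewrite hms (meval_hom gg v (@Mul_hom K (V K n))); apply: comm_meval => k hk.
  rewrite /gg /=; case: ifP => [_|/negbT ki].
    by rewrite (hom0 (@Mul_hom K (V K n))) mulr0 mul0r.
  have -> : Mul (mvar K n k : V K n) = rho (x (Ordinal hk)) by rewrite rho_x.
  rewrite /F -!(homM rho_hom) hbxj //; apply: contra ki => /eqP <-; by [].
have h1 : lapp F v = msubst0 i v * r.
  rewrite -{1}(decomp i v) lapp_add.
  have -> : lapp F (mvar K n i * mdivX i v : V K n) = 0.
    have := lapp_eq (mdivX i v : V K n) (congr1 rho hbx).
    by rewrite (homM rho_hom) rho_x (hom0 rho_hom) lappM.
  rewrite addr0; have := lapp_eq (1 : V K n) hFc; rewrite !lappM /= mulr1 => ->.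
  by [].
by rewrite h1 mulrC subrr.
Qed.

Lemma comp_form (g : A -> A) (p : 'I_n -> mpoly K n) (q : mpoly K n) i :
  is_alg_hom g -> (forall i, g (x i) = x i) -> (forall i, g (y i) = y i + P (p i) * e i) ->
  g (y i + P q * e i) = y i + P (p i + q - mvar K n i * p i * q) * e i.
Proof.
move=> hg hgx hgy.
have hge : g (e i) = e i - x i * P (p i) * e i.
  by rewrite !eE (homB hg) (hom1 hg) (homM hg) hgx hgy mulrDr opprD addrA -!eE mulrA.
rewrite (homD hg) (homM hg) gP // hgy hge mulrBr -addrA; congr (_ + _).
rewrite addrA PB PD !PM Pvar mulrBl mulrDl; congr (_ - _).
rewrite !mulrA -x_P; congr (_ * e i); rewrite -!mulrA; congr (_ * _).
by rewrite -!PM mulrC.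
Qed.

Lemma Ysig_jac (p : 'I_n -> mpoly K n) : admissible p ->
  jacobson_rel x (fun i => y i + P (p i) * e i).
Proof.
move=> hp; split=> [i|i j ne].
  by rewrite mulrDl yx -mulrA ex mulr0 addr0.
split.
- by rewrite mulrDr mulrDl xy_c // mulrA x_P -!mulrA e_x // eq_sym.
- exact: xx_c.
- apply/eqP; rewrite -subr_eq0 commY // /Qadm.
  by have := hp i j ne; rewrite -!/(msubst0 _ _) => ->; rewrite P0 mul0r.
Qed.

Lemma L4 (p : 'I_n -> mpoly K n) : admissible p ->
  exists g : A -> A, (is_alg_hom g /\ (forall i, g (x i) = x i)) /\
    (forall i, g (y i) = y i + meval (ext x) (p i) * (1 - x i * y i)).
Proof.
move=> hp; have [g [hg hgxy]] := univ_ex (Ysig_jac hp).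
exists g; split; first by split=> // i; case: (hgxy i).
by move=> i; case: (hgxy i) => _ ->; rewrite eE.
Qed.

Lemma L3 (g : A -> A) : is_alg_hom g -> (forall i, g (x i) = x i) ->
  exists2 p : 'I_n -> mpoly K n, admissible p &
   ((is_alg_hom g /\ (forall i, g (x i) = x i)) /\
    (forall i, g (y i) = y i + meval (ext x) (p i) * (1 - x i * y i))).
Proof.
move=> hg hgx; pose p := fun i => lapp (rho (g (y i) - y i)) 1.
have hgy : forall i, g (y i) = y i + P (p i) * e i by move=> i; exact: st_form.
exists p; last by split=> // i; rewrite hgy eE.
move=> i j ne; apply: (@P_ee_eq0 _ i j).
rewrite -commY // -!hgy -!(homM hg) yy_c subrr //.
Qed.

Lemma L1 (g h : A -> A) : is_alg_hom g -> (forall i, g (x i) = x i) ->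
  is_alg_hom h -> (forall i, h (x i) = x i) -> forall a, g (h a) = h (g a).
Proof.
move=> hg hgx hh hhx; apply: univ_uniq; try exact: comp_hom.
move=> i; split; first by rewrite /= hhx hgx hhx.
rewrite /=.
have hgy : forall i, g (y i) = y i + P (lapp (rho (g (y i) - y i)) 1) * e i by exact: st_form.
have hhy : forall i, h (y i) = y i + P (lapp (rho (h (y i) - y i)) 1) * e i by exact: st_form.
rewrite hhy hgy (comp_form _ _ hg hgx hgy) (comp_form _ _ hh hhx hhy).
congr (_ + P _ * _); rewrite [X in X - _]addrC; congr (_ - _).
by rewrite -!mulrA [X in _ * X]mulrC.
Qed.

Lemma L2 (g : A -> A) : is_alg_hom g -> (forall i, g (x i) = x i) ->
  ~ (forall a, g a = a) -> injective g /\ ~ bijective g.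
Proof.
move=> hg hgx nid; split; first exact: st_inj.
case=> h ghK hgK; apply: nid.
have hh : is_alg_hom h.
  split=> [a b|a b||c a].
  - by rewrite -{1}(hgK a) -{1}(hgK b) -(homD hg) ghK.
  - by rewrite -{1}(hgK a) -{1}(hgK b) -(homM hg) ghK.
  - by rewrite -{1}(hom1 hg) ghK.
  - by rewrite -{1}(hgK a) -(homZ hg) ghK.
have hhx : forall i, h (x i) = x i by move=> i; rewrite -{1}(hgx i) ghK.
pose p := fun i => lapp (rho (g (y i) - y i)) 1.
pose q := fun i => lapp (rho (h (y i) - y i)) 1.
have hgy : forall i, g (y i) = y i + P (p i) * e i by move=> i; exact: st_form.
have hhy : forall i, h (y i) = y i + P (q i) * e i by move=> i; exact: st_form.
have p0 : forall i, P (p i) = 0.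
  move=> i; have := hgK (y i); rewrite hhy (comp_form _ _ hg hgx hgy).
  move=> h1; have /P_e_eq0 hs := addrI _ (etrans h1 (esym (addr0 (y i)))).
  have := unit_alg (mvar K n i) (p i) (q i); rewrite hs mulr0 subr0 => /unit_var hxp.
  by rewrite -(mul1r (P (p i))) -(yx i) -mulrA -Pvar -PM hxp P0 mulr0.
apply: (univ_uniq hg (id_hom A)) => i; split => //.
by rewrite hgy p0 mul0r addr0.
Qed.
End Main.

Theorem corollary10p1 (K : fieldType) (hK : [pchar K] =i pred0) (n : nat)
  (A : algType K) (x y : 'I_n -> A) (hA : is_Sn x y) :
  let st := fun g : A -> A => is_alg_hom g /\ (forall i, g (x i) = x i) in
  let sigma := fun (p : 'I_n -> mpoly K n) (g : A -> A) =>
    st g /\ (forall i, g (y i) = y i + meval (ext x) (p i) * (1 - x i * y i)) in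
  [/\ (forall g h, st g -> st h -> forall a, g (h a) = h (g a)),
      (forall g, st g -> ~ (forall a, g a = a) -> injective g /\ ~ bijective g),
      (forall g, st g -> exists2 p, admissible p & sigma p g) &
      (forall p, admissible p -> exists g, sigma p g)].
Proof.
move=> st sigma; subst st sigma; split.
- by move=> g h [hg hgx] [hh hhx]; exact: (L1 hA).
- by move=> g [hg hgx]; exact: (L2 hA).
- by move=> g [hg hgx]; exact: (L3 hA).
- by move=> p hp; exact: (L4 hA).
Qed.
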